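(* Let $m=2^p>2$ and let $r_1,\dots,r_m\in\{1,\dots,m\}$ (repetitions allowed). Let $A$ be the $m\times m$ matrix whose $i$-th row is the $r_i$-th row of $H(m)$. If $b(r_1-1)\oplus b(r_2-1)\oplus\dots\oplus b(r_m-1)=0$, then $\mathrm{perm}\,A\neq0$.
   Context: For $m=2^p$, the Sylvester matrix $H(m)$ is defined recursively by $H(1)=[1]$ and $H(2^p)=\begin{bmatrix}H(2^{p-1})&H(2^{p-1})\\ H(2^{p-1})&-H(2^{p-1})\end{bmatrix}$, rows and columns indexed $1,\dots,m$; equivalently $[H(m)]_{i,j}=(-1)^{b(i-1)\odot b(j-1)}$. Here $b(x)$ denotes the $p$-bit binary representation of $x\in\{0,\dots,m-1\}$, $\odot$ is the bitwise dot product and $\oplus$ is bitwise XOR. $\mathrm{perm}\,A=\sum_{\sigma\in S_m}\prod_{i=1}^m a_{i,\sigma(i)}$. *)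

(* Defs.v *)
From HB Require Import structures.
From mathcomp Require Import all_boot all_order all_algebra all_fingroup.
Set Implicit Arguments. Unset Strict Implicit. Unset Printing Implicit Defensive.
Import GRing.Theory.
Local Open Scope ring_scope.

Definition bitn (x k : nat) : bool := odd (x %/ 2 ^ k).

Definition bdot (p x y : nat) : nat := (\sum_(k < p) (bitn x k && bitn y k))%N.

(* Sylvester matrix H(2^p), 0-based indices: entry (i,j) = (-1)^(b(i) . b(j)) *)
Definition sylvester (p : nat) : 'M[int]_(2 ^ p) :=
  \matrix_(i < 2 ^ p, j < 2 ^ p) ((-1) ^+ bdot p i j).

Definition permanent (R : comNzRingType) (n : nat) (A : 'M[R]_n) : R :=
  \sum_(s : 'S_n) \prod_(i < n) A i (s i).

Definition bigxor (n : nat) (r : 'I_n -> nat) : nat :=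
  \big[Nat.lxor/0%N]_(i < n) r i.

(* Main.v *)
Require Import Defs.
From HB Require Import structures.
From mathcomp Require Import all_boot all_order all_algebra all_fingroup.
From mathcomp Require Import zify ring.
From Stdlib Require PeanoNat.
Set Implicit Arguments. Unset Strict Implicit. Unset Printing Implicit Defensive.

Lemma sum_bool_card (I : finType) (A : {set I}) (P : pred I) :
  (\sum_(i in A) (P i : nat) = #|[set i in A | P i]|)%N.
Proof.
transitivity (\sum_(i | (i \in A) && P i) 1%N).
  by rewrite big_mkcondr; apply: eq_bigr => i _; case: (P i).
by rewrite -sum1_card; apply: eq_bigl => i; rewrite inE.
Qed.

Lemma odd_sum_const (I : finType) (A : {set I}) (f : I -> nat) pi :
  (forall i, i \in A -> odd (f i) = pi) ->
  odd (\sum_(i in A) f i) = odd #|A| && pi.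
Proof.
move=> H.
have -> : (\sum_(i in A) f i = \sum_(i in A) (pi + (f i)./2 * 2))%N.
  by apply: eq_bigr => i /H <-; rewrite muln2 odd_double_half.
rewrite big_split /= sum_nat_const -big_distrl /= oddD oddM (oddM _ 2) andbF addbF.
by case: (pi).
Qed.

Section Match.
Variable T : finType.
Variable rho : T -> bool.

Definition pm (K : {set T}) : {set {set {set T}}} :=
  [set M | [&& trivIset M, cover M == K & [forall S in M, #|S| == 2]]].
Definition agree (S : {set T}) := [forall a in S, forall b in S, rho a == rho b].
Definition pmA (K : {set T}) := [set M in pm K | [forall S in M, agree S]].

Lemma pmAP K M : reflect [/\ trivIset M, cover M = K, forall S, S \in M -> #|S| = 2
                               & forall S, S \in M -> agree S] (M \in pmA K).
Proof.
rewrite !inE; apply: (iffP idP).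
  case/andP => /and3P[tM /eqP cM /forallP c2] /forallP ag; split => // S SM.
    by move: (c2 S); rewrite SM => /eqP.
  by move: (ag S); rewrite SM.
case=> tM cM c2 ag; rewrite tM cM eqxx /=; apply/andP; split; apply/forallP => S;
  apply/implyP => SM; [by rewrite c2 | exact: ag].
Qed.

Lemma pmA0 : pmA set0 = [set set0].
Proof.
apply/setP => M; rewrite in_set1; apply/pmAP/eqP.
  case=> _ cM c2 _; apply/setP => S; rewrite inE; apply/negbTE/negP => SM.
  have := c2 S SM; have : S \subset cover M by apply: bigcup_sup.
  by rewrite cM subset0 => /eqP ->; rewrite cards0.
move=> ->; split.
- by rewrite /trivIset /cover !big_set0 cards0.
- by rewrite /cover big_set0.
- by move=> S; rewrite inE.
- by move=> S; rewrite inE.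
Qed.

Lemma pair_of_card2 (S : {set T}) a : #|S| = 2 -> a \in S ->
  exists2 b, a != b & S = [set a; b].
Proof.
move/eqP/cards2P => [x [y [xy ->]]]; rewrite !inE => /orP[] /eqP ->.
  by exists y.
by exists x; [rewrite eq_sym | rewrite setUC].
Qed.

Lemma exactly_one (K : {set T}) a M : M \in pmA K -> a \in K ->
  (\sum_(b in [set b in K :\ a | rho b == rho a]) ([set a; b] \in M : nat) = 1)%N.
Proof.
case/pmAP => tM cM c2 ag aK.
have : a \in cover M by rewrite cM.
case/bigcupP => S0 S0M aS0.
have [b0 ab0 eS0] := pair_of_card2 (c2 _ S0M) aS0.
have b0K : b0 \in K by rewrite -cM; apply/bigcupP; exists S0; rewrite // eS0 !inE eqxx orbT.
have rb0 : rho b0 == rho a.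
  have := ag _ S0M; rewrite /agree eS0 => /forall_inP /(_ b0).
  rewrite !inE eqxx orbT => /(_ isT) /forall_inP /(_ a); rewrite !inE eqxx => /(_ isT) h; exact: h.
have b0B : b0 \in [set b in K :\ a | rho b == rho a] by rewrite !inE eq_sym ab0 b0K rb0.
rewrite (bigD1 b0) //= -eS0 S0M big1 // => b /andP[]; rewrite !inE => /andP[/andP[ba bK] _] bb0.
case abM : ([set a; b] \in M) => //; exfalso.
have := (elimT trivIsetP tM) _ _ abM S0M.
have -> : ([set a; b] != S0).
  rewrite eS0; apply/negP => /eqP/setP/(_ b); rewrite !inE eqxx orbT => /esym/orP[] /eqP e.
    by rewrite e eqxx in ba.
  by rewrite e eqxx in bb0.
move=> /(_ isT) /disjoint_setI0 /setP /(_ a); rewrite !inE eqxx /= aS0.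
by [].
Qed.

Lemma card_pair (K : {set T}) a b : a \in K -> b \in K -> a != b -> rho b == rho a ->
  #|[set M in pmA K | [set a; b] \in M]| = #|pmA (K :\ a :\ b)|.
Proof.
move=> aK bK ab rb.
set S := [set a; b]; set K' := K :\ a :\ b.
have notS M' : M' \in pmA K' -> S \notin M'.
  case/pmAP => _ cM' _ _; apply/negP => SM'.
  have : a \in cover M' by apply/bigcupP; exists S; rewrite // !inE eqxx.
  by rewrite cM' !inE eqxx /= andbF.
rewrite -[RHS](card_in_imset (f := fun M' => S |: M')); last first.
  by move=> M1 M2 h1 h2 /= e; rewrite -(setU1K (notS _ h1)) e setU1K // notS.
apply: eq_card => M; rewrite inE; apply/andP/imsetP.
  case=> MK SM; exists (M :\ S); last by rewrite setD1K.
  case/pmAP: MK => tM cM c2 ag; apply/pmAP; split.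
  - exact: trivIsetS (subD1set M S) tM.
  - rewrite coverD1 // cM; apply/setP => t; rewrite !inE.
    by rewrite negb_or andbA [(t != b) && _]andbC.
  - by move=> S'; rewrite inE => /andP[_ /c2].
  - by move=> S'; rewrite inE => /andP[_ /ag].
case=> M' M'K ->; split; last exact: setU11.
have nSM' := notS _ M'K.
case/pmAP: M'K => tM cM c2 ag; apply/pmAP; split.
- apply: (trivIsetU1 _ tM _).1.
    move=> B BM; rewrite disjoints_subset; apply/subsetP => t tS; rewrite inE; apply/negP => tB.
    have : t \in cover M' by apply/bigcupP; exists B.
    by rewrite cM !inE; move: tS; rewrite !inE => /orP[] /eqP ->; rewrite eqxx ?andbF.
  by apply/negP => /c2; rewrite cards0.
- have -> : cover (S |: M') = S :|: cover M' by rewrite /cover big_setU1.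
  rewrite cM; apply/setP => t; rewrite !inE.
  case: (t =P a) => [->|_] /=; first by rewrite aK.
  by case: (t =P b) => [->|_] //=.
- move=> S'; rewrite !inE => /orP[/eqP ->|/c2 //]; by rewrite cards2 ab.
- move=> S'; rewrite !inE => /orP[/eqP ->|/ag //].
  apply/forall_inP => x; rewrite !inE => hx; apply/forall_inP => y; rewrite !inE => hy.
  by case/orP: hx => /eqP ->; case/orP: hy => /eqP ->; rewrite // eq_sym.
Qed.

Lemma pmA_step (K : {set T}) a : a \in K ->
  #|pmA K| = (\sum_(b in [set b in K :\ a | rho b == rho a]) #|pmA (K :\ a :\ b)|)%N.
Proof.
move=> aK; rewrite -sum1_card.
transitivity (\sum_(M in pmA K) \sum_(b in [set b in K :\ a | rho b == rho a])
                   ([set a; b] \in M : nat))%N.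
  by apply: eq_bigr => M MK; rewrite exactly_one.
rewrite exchange_big /=; apply: eq_bigr => b; rewrite !inE => /andP[/andP[ba bK] rb].
by rewrite sum_bool_card card_pair // eq_sym.
Qed.

Lemma pmA_odd (K : {set T}) :
  odd #|pmA K| = ~~ odd #|K| && ~~ odd #|[set t in K | rho t]|.
Proof.
move: {2}#|K| (leqnn #|K|) => n; elim: n K => [|n IH] K.
  rewrite leqn0 cards_eq0 => /eqP ->; rewrite pmA0 cards1 cards0 /=.
  by rewrite (_ : [set t in set0 | rho t] = set0) ?cards0 //; apply/setP => t; rewrite !inE.
case: (set_0Vmem K) => [-> _|[a aK] Kn].
  rewrite pmA0 cards1 cards0 /=.
  by rewrite (_ : [set t in set0 | rho t] = set0) ?cards0 //; apply/setP => t; rewrite !inE.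
set R := [set t in K | rho t].
set pi := ~~ odd #|K| && ~~ odd #|R|.
rewrite (pmA_step aK) (odd_sum_const (pi := pi)); last first.
  move=> b; rewrite !inE => /andP[/andP[ba bK] rb].
  have hK : #|K| = (#|K :\ a :\ b|).+2.
    by rewrite (cardsD1 a K) aK (cardsD1 b (K :\ a)) !inE ba bK.
  have hR : #|R| = (rho a + rho a + #|[set t in K :\ a :\ b | rho t]|)%N.
    rewrite (cardsD1 a R) (cardsD1 b (R :\ a)) !inE aK ba bK (eqP rb) /= addnA.
    congr (_ + _)%N; apply: eq_card => t; rewrite !inE.
    by rewrite !andbA.
  rewrite IH; last by move: Kn; rewrite hK; lia.
  by rewrite /pi hK hR /= negbK !oddD addbb.
case pP : pi; last by rewrite andbF.
rewrite andbT.
move: pP; rewrite /pi => /andP[eK eR].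
set C := [set t in K | rho t == rho a].
have hC : #|C| = (#|[set b in K :\ a | rho b == rho a]|).+1.
  rewrite (cardsD1 a C) !inE aK eqxx /=; congr (_.+1); apply: eq_card => t; rewrite !inE.
  by rewrite andbA.
have eC : ~~ odd #|C|.
  case ra : (rho a).
    by rewrite (_ : C = R) //; apply/setP => t; rewrite /C /R !inE ra; case: (rho t).
  have := cardsID [set t | rho t] K.
  rewrite (_ : K :&: [set t | rho t] = R); last by apply/setP => t; rewrite /R !inE andbC.
  rewrite (_ : K :\: [set t | rho t] = C); last first.
    by apply/setP => t; rewrite /C !inE ra; case: (rho t); rewrite /= ?andbF ?andbT.
  by move=> h; move: eK; rewrite -h oddD (negbTE eR).
by move: eC; rewrite hC /=; case: (odd _).
Qed.
End Match.

Import GRing.Theory.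
Local Open Scope ring_scope.

Fixpoint Col (q : nat) : finType :=
  if q is q'.+1 then (bool * Col q')%type else unit.

Definition sgn (b : bool) : int := if b then -1 else 1.

Fixpoint chiC (q : nat) : (nat -> bool) -> Col q -> int :=
  match q return (nat -> bool) -> Col q -> int with
  | 0 => fun _ _ => 1
  | q'.+1 => fun f y => sgn (f 0%N && y.1) * @chiC q' (fun k => f k.+1) y.2
  end.

Lemma cardCol q : #|Col q| = (2 ^ q)%N.
Proof. elim: q => [|q IH] /=; first by rewrite card_unit. by rewrite card_prod IH card_bool expnS. Qed.

Lemma sgnM a b : sgn a * sgn b = sgn (a (+) b).
Proof. by case: a; case: b; rewrite /= ?mulN1r ?mulr1 ?opprK. Qed.

Lemma chiC_ext q f g x : (forall k, f k = g k) -> chiC (q := q) f x = chiC g x.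
Proof.
elim: q f g x => [|q IH] f g x H //=.
by rewrite H (IH _ (fun k => g k.+1)).
Qed.

Lemma chiCM q f g x : chiC (q := q) f x * chiC g x = chiC (fun k => f k (+) g k) x.
Proof.
elim: q f g x => [|q IH] f g x /=; first by rewrite mulr1.
rewrite mulrACA sgnM IH; congr (sgn _ * _).
by case: (f 0%N); case: (g 0%N); case: (x.1).
Qed.

Definition validt (C T : finType) (K : {set T}) (tau : {ffun C -> T}) :=
  injectiveb tau && [forall x, tau x \in K].

Definition Pq (q : nat) (T : finType) (K : {set T}) (lam : T -> nat -> bool) : int :=
  \sum_(tau : {ffun Col q -> T} | validt K tau) \prod_(x : Col q) chiC (lam (tau x)) x.

Definition condq (q : nat) (T : finType) (K : {set T}) (lam : T -> nat -> bool) :=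
  [forall k : 'I_q, ~~ odd #|[set t in K | lam t k]|].

Definition lam2 (T : finType) (lam : T -> nat -> bool) (S : {set T}) (k : nat) :=
  odd #|[set t in S | lam t k.+1]|.

Lemma card_filter2 (T : finType) (P : pred T) a b : a != b ->
  #|[set t in [set a; b] | P t]| = (P a + P b)%N.
Proof.
by move=> ab; rewrite -sum_bool_card big_setU1 /= ?big_set1 // inE.
Qed.

Lemma lam2_pair (T : finType) (lam : T -> nat -> bool) a b k : a != b ->
  lam2 lam [set a; b] k = lam a k.+1 (+) lam b k.+1.
Proof. by move=> ab; rewrite /lam2 card_filter2 // oddD; case: (lam a _); case: (lam b _). Qed.

Lemma prod_split q (F : Col q.+1 -> int) :
  \prod_(y : Col q.+1) F y = \prod_(x : Col q) (F (false, x) * F (true, x)).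
Proof.
rewrite (_ : \prod_(y : Col q.+1) F y = \prod_(p : bool * Col q) F (p.1, p.2));
  last by apply: eq_bigr => -[].
by rewrite -(pair_bigA _ (fun b x => F (b, x))) exchange_big /=; apply: eq_bigr => x _; rewrite big_bool mulrC.
Qed.

Lemma chiC_pair q f g x :
  chiC (q := q.+1) f (false, x) * chiC (q := q.+1) g (true, x) =
  sgn (g 0%N) * chiC (fun k => f k.+1 (+) g k.+1) x.
Proof. by rewrite /= andbF andbT mul1r mulrCA chiCM. Qed.

Section Step.
Variables (q : nat) (T : finType) (K : {set T}) (lam : T -> nat -> bool).

Definition gt (tau : {ffun Col q.+1 -> T}) : {ffun Col q -> {set T}} :=
  [ffun x => [set tau (false, x); tau (true, x)]].
Definition validg (g : {ffun Col q -> {set T}}) :=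
  [forall x, (#|g x| == 2%N) && (g x \subset K)] &&
  [forall x, forall y, (x != y) ==> [disjoint g x & g y]].
Definition other (S : {set T}) (t : T) := odflt t [pick u in S :\ t].
Definition mk (g : {ffun Col q -> {set T}}) (h : {ffun Col q -> T}) : {ffun Col q.+1 -> T} :=
  [ffun y : Col q.+1 => if y.1 then h y.2 else other (g y.2) (h y.2)].

Lemma other_spec (S : {set T}) t : #|S| = 2%N -> t \in S ->
  [/\ other S t \in S, other S t != t & S = [set other S t; t]].
Proof.
move=> S2 tS; have [b tb eS] := pair_of_card2 S2 tS.
have -> : other S t = b.
  rewrite /other eS; case: pickP => [u|].
    by rewrite !inE => /andP[ut /orP[] /eqP // eu]; rewrite eu eqxx in ut.
  by move/(_ b); rewrite !inE eqxx orbT eq_sym tb.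
by rewrite eS !inE eqxx orbT eq_sym tb setUC.
Qed.

Lemma validgP (g : {ffun Col q -> {set T}}) : reflect
  ((forall x, #|g x| = 2%N /\ g x \subset K) /\
   (forall x y, x != y -> [disjoint g x & g y])) (validg g).
Proof.
apply: (iffP andP) => [[/forallP H1 /forallP H2]|[H1 H2]]; split.
- by move=> x; case/andP: (H1 x) => /eqP.
- by move=> x y; move/forallP: (H2 x) => /(_ y) /implyP.
- by apply/forallP => x; case: (H1 x) => -> ->.
- by apply/forallP => x; apply/forallP => y; apply/implyP; apply: H2.
Qed.

Lemma valid_gt (tau : {ffun Col q.+1 -> T}) : validt K tau -> validg (gt tau).
Proof.
case/andP => /injectiveP inj /forallP inK; apply/validgP; split.
  move=> x; rewrite ffunE cards2 (inj_eq inj) xpair_eqE /=; split => //.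
  by apply/subsetP => t; rewrite !inE => /orP[] /eqP ->.
move=> x y nxy; rewrite !ffunE disjoints_subset; apply/subsetP => t.
rewrite !inE => /orP[] /eqP ->; rewrite !(inj_eq inj) !xpair_eqE /= (negbTE nxy) ?andbF //.
Qed.

Lemma mk_valid (g : {ffun Col q -> {set T}}) (h : {ffun Col q -> T}) : validg g -> [forall x, h x \in g x] ->
  validt K (mk g h) && (gt (mk g h) == g).
Proof.
case/validgP => H1 H2 /forallP hg.
have os x := other_spec (H1 x).1 (hg x).
have inS b x : mk g h (b, x) \in g x.
  by rewrite ffunE /=; case: b; [apply: hg | case: (os x)].
apply/andP; split; last first.
  by apply/eqP/ffunP => x; rewrite !ffunE /=; case: (os x) => _ _ <-.
apply/andP; split; last first.
  by apply/forallP => -[b x]; apply: (subsetP (H1 x).2); apply: inS.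
apply/injectiveP => -[b x] [b' y] e.
case: (x =P y) => [exy|/eqP nxy]; last first.
  have := H2 _ _ nxy; rewrite disjoints_subset => /subsetP /(_ _ (inS b x)).
  by rewrite inE e inS.
subst y; congr (_, _); move: e; rewrite !ffunE /=.
case: (os x) => _ hne _.
by case: b; case: b' => // e; [rewrite -e eqxx in hne | rewrite e eqxx in hne].
Qed.

Lemma mk_h (tau : {ffun Col q.+1 -> T}) (g : {ffun Col q -> {set T}}) : validt K tau -> gt tau = g ->
  mk g [ffun x => tau (true, x)] = tau.
Proof.
case/andP => /injectiveP inj _ <-; apply/ffunP => -[b x]; rewrite !ffunE /=.
case: b => //.
have ne : tau (false, x) != tau (true, x) by rewrite (inj_eq inj) xpair_eqE.
have := @other_spec [set tau (false, x); tau (true, x)] (tau (true, x)).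
rewrite cards2 ne !inE eqxx orbT => /(_ erefl isT) [].
by move=> /orP[/eqP //|/eqP ->]; rewrite eqxx.
Qed.


Lemma sum_over_g (F : {ffun Col q.+1 -> T} -> int) :
  \sum_(tau | validt K tau) F tau =
  \sum_(g | validg g) \sum_(h : {ffun Col q -> T} | [forall x, h x \in g x]) F (mk g h).
Proof.
rewrite (partition_big gt validg) /=; last exact: valid_gt.
apply: eq_bigr => g vg.
rewrite (reindex_onto (mk g) (fun tau => [ffun x => tau (true, x)])) /=; last first.
  by move=> tau /andP[vt /eqP e]; apply: mk_h.
apply: eq_bigl => h; apply/idP/idP.
  case/andP => /andP[_ /eqP e] _; apply/forallP => x.
  by rewrite -e !ffunE /= !inE eqxx orbT.
move=> hg; rewrite mk_valid //=; apply/eqP/ffunP => x; by rewrite !ffunE.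
Qed.

Definition cS (S : {set T}) : int := \sum_(t in S) sgn (lam t 0%N).

Lemma F_mk (g : {ffun Col q -> {set T}}) (h : {ffun Col q -> T}) :
  validg g -> [forall x, h x \in g x] ->
  \prod_(y : Col q.+1) chiC (lam (mk g h y)) y =
  \prod_(x : Col q) (sgn (lam (h x) 0%N) * chiC (lam2 lam (g x)) x).
Proof.
case/validgP => H1 _ /forallP hg.
rewrite prod_split; apply: eq_bigr => x _; rewrite !ffunE /= chiC_pair.
case: (other_spec (H1 x).1 (hg x)) => _ ne eg.
congr (_ * _); apply: chiC_ext => k.
have -> : lam2 lam (g x) k = lam2 lam [set other (g x) (h x); h x] k by rewrite -eg.
by rewrite lam2_pair.
Qed.

Lemma sum_h (g : {ffun Col q -> {set T}}) : validg g ->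
  \sum_(h : {ffun Col q -> T} | [forall x, h x \in g x])
      \prod_(y : Col q.+1) chiC (lam (mk g h y)) y =
  (\prod_(x : Col q) chiC (lam2 lam (g x)) x) * \prod_(x : Col q) cS (g x).
Proof.
move=> vg.
rewrite (eq_bigr (fun h : {ffun Col q -> T} => (\prod_(x : Col q) sgn (lam (h x) 0%N)) *
                          \prod_(x : Col q) chiC (lam2 lam (g x)) x)); last first.
  by move=> h hg; rewrite F_mk // big_split.
rewrite -big_distrl /= mulrC; congr (_ * _).
rewrite /cS bigA_distr_big_dep /=.
by apply: eq_bigl => h; apply/forallP/familyP.
Qed.

Lemma validg_inj (g : {ffun Col q -> {set T}}) : validg g -> injective g.
Proof.
case/validgP => H1 H2 x y e; apply/eqP/negP => /negP nxy.
have := H2 _ _ nxy; rewrite -e -setI_eq0 setIid -cards_eq0.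
by rewrite (H1 x).1.
Qed.

Hypothesis cardK : #|K| = (2 ^ q.+1)%N.

Lemma card_pm M : M \in pm K -> #|M| = (2 ^ q)%N.
Proof.
rewrite inE => /and3P[tM /eqP cM /forall_inP c2].
move/eqP: tM; rewrite cM cardK (eq_bigr (fun _ => 2%N)); last by move=> S /c2/eqP.
rewrite sum_nat_const expnS; lia.
Qed.

Lemma validg_pm (g : {ffun Col q -> {set T}}) : validg g -> [set g x | x : Col q] \in pm K.
Proof.
move=> vg; have inj := validg_inj vg; case/validgP: vg => H1 H2.
have tA : trivIset [set g x | x : Col q].
  apply/trivIsetP => S1 S2 /imsetP[x _ ->] /imsetP[y _ ->] ne.
  by apply: H2; apply: contraNneq ne => ->.
rewrite inE tA /=; apply/andP; split.
  rewrite eqEcard; apply/andP; split.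
    by apply/bigcupsP => S /imsetP[x _ ->]; exact: (H1 x).2.
  move/eqP: tA => <-; rewrite big_imset /=; last by move=> x y _ _; apply: inj.
  rewrite (eq_bigr (fun _ => 2%N)); last by move=> x _; rewrite (H1 x).1.
  by rewrite sum_nat_const cardCol cardK expnS mulnC.
by apply/forall_inP => S /imsetP[x _ ->]; rewrite (H1 x).1.
Qed.

Lemma validg_M (g : {ffun Col q -> {set T}}) M : M \in pm K ->
  validg g && ([set g x | x : Col q] == M) = validt M g.
Proof.
move=> MK; have cM := card_pm MK.
move: MK; rewrite inE => /and3P[tM /eqP cvM /forall_inP c2].
apply/idP/idP.
  case/andP => vg /eqP eM; rewrite /validt; apply/andP; split.
    by apply/injectiveP; apply: validg_inj.
  by apply/forallP => x; rewrite -eM imset_f.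
case/andP => /injectiveP inj /forallP gM; apply/andP; split.
  apply/validgP; split.
    move=> x; split; first by apply/eqP/c2.
    by rewrite -cvM; apply/subsetP => t tg; apply/bigcupP; exists (g x).
  move=> x y nxy; apply: (elimT trivIsetP tM) => //.
  by apply: contra nxy => /eqP /inj ->.
rewrite eqEcard; apply/andP; split.
  by apply/subsetP => S /imsetP[x _ ->].
by rewrite card_imset // cM cardCol.
Qed.

Lemma Pq_step :
  Pq q.+1 K lam = \sum_(M in pm K) (\prod_(S in M) cS S) * Pq q M (lam2 lam).
Proof.
rewrite /Pq sum_over_g.
rewrite (eq_bigr (fun g : {ffun Col q -> {set T}} =>
   (\prod_(x : Col q) chiC (lam2 lam (g x)) x) * \prod_(x : Col q) cS (g x)));
  last by move=> g vg; rewrite sum_h.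
rewrite (partition_big (fun g : {ffun Col q -> {set T}} => [set g x | x : Col q])
                       (mem (pm K))) /=; last exact: validg_pm.
apply: eq_bigr => M MK; rewrite big_distrr /=.
rewrite (eq_bigl (validt M)); last by move=> g; rewrite validg_M.
apply: eq_bigr => g vg; rewrite mulrC; congr (_ * _).
have : validg g && ([set g x | x : Col q] == M) by rewrite validg_M.
case/andP => vgg /eqP <-.
by rewrite big_imset //= => x y _ _; apply: (validg_inj vgg).
Qed.
End Step.

Lemma dvdz_prod_cong (I : finType) (A : {pred I}) (d : int) (x y : I -> int) :
  (forall i, i \in A -> (d %| x i - y i)%Z) ->
  (d %| \prod_(i in A) x i - \prod_(i in A) y i)%Z.
Proof.
move=> H; apply: (big_ind2 (fun a b => (d %| a - b)%Z)) => //.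
move=> a1 b1 a2 b2 h1 h2.
have -> : a1 * a2 - b1 * b2 = a1 * (a2 - b2) + (a1 - b1) * b2.
  by rewrite mulrBr mulrBl addrA subrK.
by apply: rpredD; [apply: dvdz_mull | apply: dvdz_mulr].
Qed.

Lemma dvdz_sum_cong (I : finType) (A : {pred I}) (d : int) (x y : I -> int) :
  (forall i, i \in A -> (d %| x i - y i)%Z) ->
  (d %| \sum_(i in A) x i - \sum_(i in A) y i)%Z.
Proof. by move=> H; rewrite -sumrB rpred_sum. Qed.

Lemma prod_bool (I : finType) (A : {pred I}) (b : I -> bool) :
  \prod_(i in A) ((b i)%:R : int) = ([forall i in A, b i])%:R.
Proof.
case: forall_inP => [H|/forall_inP]; first by rewrite big1 // => i /H ->.
rewrite negb_forall_in => /existsP[i /andP[iA bi]].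
by rewrite (bigD1 i) //= (negbTE bi) mul0r.
Qed.

Lemma odd_sum_filter (I : finType) (A : {set I}) (f : I -> nat) :
  odd (\sum_(i in A) f i) = odd #|[set i in A | odd (f i)]|.
Proof.
rewrite -sum_bool_card.
have -> : (\sum_(i in A) f i = \sum_(i in A) (odd (f i) + (f i)./2 * 2))%N.
  by apply: eq_bigr => i _; rewrite muln2 odd_double_half.
by rewrite big_split /= -big_distrl /= oddD oddM andbF addbF.
Qed.

Definition dS (T : finType) (lam : T -> nat -> bool) (S : {set T}) : int :=
  1 + \sum_(t in S) (if lam t 0%N then -1 else 0).

Lemma cS_dS (T : finType) (lam : T -> nat -> bool) (S : {set T}) :
  #|S| = 2%N -> cS lam S = 2 * dS lam S.
Proof.
move=> S2; rewrite /cS /dS.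
rewrite (eq_bigr (fun t => 1 + 2 * (if lam t 0%N then -1 else 0))); last first.
  by move=> t _; case: (lam t 0%N); rewrite /sgn /= ?mulr0 ?addr0 //.
rewrite big_split /= sumr_const S2 -mulr_sumr mulrDr mulr1.
by [].
Qed.

Lemma agree_pair (T : finType) (rho : T -> bool) a b :
  agree rho [set a; b] = (rho a == rho b).
Proof.
apply/forall_inP/eqP => [H|e].
  by move: (H a); rewrite !inE eqxx => /(_ isT) /forall_inP /(_ b); rewrite !inE eqxx orbT => /(_ isT)/eqP.
move=> x; rewrite !inE => hx; apply/forall_inP => y; rewrite !inE => hy.
by case/orP: hx => /eqP ->; case/orP: hy => /eqP ->; rewrite ?e.
Qed.

Lemma dS_agree (T : finType) (lam : T -> nat -> bool) (S : {set T}) :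
  #|S| = 2%N -> (2 %| dS lam S - (agree (fun t => lam t 0%N) S)%:R)%Z.
Proof.
move/eqP/cards2P => [a [b [ab ->]]].
rewrite agree_pair /dS big_setU1 /= ?big_set1 ?inE //.
by case: (lam a 0%N); case: (lam b 0%N).
Qed.

Lemma condq_split q (T : finType) (K : {set T}) (lam : T -> nat -> bool) :
  condq q.+1 K lam = ~~ odd #|[set t in K | lam t 0%N]| &&
                     [forall k : 'I_q, ~~ odd #|[set t in K | lam t k.+1]|].
Proof.
apply/forallP/andP => [H|[h0 /forallP hk] k].
  split; first exact: (H ord0).
  by apply/forallP => k; exact: (H (lift ord0 k)).
case: k => [[|k] hk'] //=.
exact: (hk (Ordinal (hk' : (k < q)%N))).
Qed.

Lemma condq_pm q (T : finType) (K : {set T}) (lam : T -> nat -> bool) M :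
  M \in pm K ->
  condq q M (lam2 lam) = [forall k : 'I_q, ~~ odd #|[set t in K | lam t k.+1]|].
Proof.
rewrite inE => /and3P[tM /eqP cM _].
apply: eq_forallb => k; congr (~~ _).
rewrite -[in RHS]sum_bool_card -cM big_trivIset //= odd_sum_filter.
by congr (odd _); apply: eq_card => S; rewrite !inE /lam2 sum_bool_card.
Qed.

Lemma Pq0 (T : finType) (K : {set T}) (lam : T -> nat -> bool) :
  #|K| = 1%N -> Pq 0 K lam = 1.
Proof.
move/eqP/cards1P => [t0 ->]; rewrite /Pq (big_pred1 [ffun _ : Col 0 => t0]) /=.
  by rewrite big1.
move=> tau; rewrite /validt /=; apply/andP/eqP => [[_ /forallP H]|->].
  by apply/ffunP => -[]; move: (H tt); rewrite !inE ffunE => /eqP.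
split; first by apply/injectiveP => -[] -[].
by apply/forallP => x; rewrite ffunE inE.
Qed.

Theorem mainP q : forall (T : finType) (K : {set T}) (lam : T -> nat -> bool),
  #|K| = (2 ^ q)%N ->
  (2 ^+ (2 ^ q) %| Pq q K lam - 2 ^+ (2 ^ q).-1 * (condq q K lam)%:R)%Z.
Proof.
elim: q => [|q IH] T K lam cK.
  rewrite Pq0 // (_ : condq 0 K lam = true); first by rewrite /= mulr1 subrr dvdz0.
  by apply/forallP => -[].
set N := (2 ^ q)%N.
have N1 : (0 < N)%N by rewrite expn_gt0.
rewrite (Pq_step lam cK) condq_split.
set c0 := ~~ odd #|[set t in K | lam t 0%N]|.
set c := [forall k : 'I_q, ~~ odd #|[set t in K | lam t k.+1]|].
have c2 M S : M \in pm K -> S \in M -> #|S| = 2%N.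
  by rewrite inE => /and3P[_ _ /forall_inP H] /H /eqP.
have hM M : M \in pm K -> (2 ^+ N %| Pq q M (lam2 lam) - 2 ^+ N.-1 * c%:R)%Z.
  move=> MK; rewrite /c -(condq_pm q lam MK); apply: IH.
  by rewrite (card_pm cK MK).
have hc M : M \in pm K -> \prod_(S in M) cS lam S = 2 ^+ N * \prod_(S in M) dS lam S.
  move=> MK; rewrite (eq_bigr (fun S => 2 * dS lam S)); last by move=> S SM; apply/cS_dS/(c2 M).
  by rewrite big_split /= prodr_const (card_pm cK MK).
have -> : \sum_(M in pm K) (\prod_(S in M) cS lam S) * Pq q M (lam2 lam) =
   2 ^+ N * 2 ^+ N.-1 * c%:R * (\sum_(M in pm K) \prod_(S in M) dS lam S) +
   \sum_(M in pm K) 2 ^+ N * (\prod_(S in M) dS lam S) *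
                    (Pq q M (lam2 lam) - 2 ^+ N.-1 * c%:R).
  rewrite mulr_sumr -big_split /=; apply: eq_bigr => M MK; rewrite hc //; ring.
have hd : (2 %| \sum_(M in pm K) \prod_(S in M) dS lam S - c0%:R)%Z.
  set b := fun M : {set {set T}} => [forall S in M, agree (fun t => lam t 0%N) S].
  have h1 : (2 %| \sum_(M in pm K) \prod_(S in M) dS lam S -
                 \sum_(M in pm K) ((b M)%:R : int))%Z.
    apply: dvdz_sum_cong => M MK; rewrite /b -prod_bool; apply: dvdz_prod_cong => S SM.
    exact: dS_agree (c2 M S MK SM).
  have h2 : \sum_(M in pm K) ((b M)%:R : int) = (#|pmA (fun t => lam t 0%N) K|)%:R.
    by rewrite -natr_sum sum_bool_card.
  have h3 : (2 %| (#|pmA (fun t => lam t 0%N) K|)%:R - c0%:R)%Z.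
    have := odd_double_half #|pmA (fun t => lam t 0%N) K|.
    rewrite pmA_odd cK expnS oddM /= => <-.
    rewrite natrD -muln2 natrM /c0 addrAC subrr add0r.
    by apply: dvdz_mull; apply: dvdzz.
  rewrite h2 in h1; have := rpredD h1 h3; by rewrite addrA subrK.
have E2 : (2 ^ q.+1)%N = (N + N)%N by rewrite expnS mul2n -addnn.
have E3 : (N + N).-1 = (N + N.-1)%N by case: (N) N1 => // n _; rewrite addnS.
rewrite E2 E3.
have -> : forall A B : int, A + B - 2 ^+ (N + N.-1) * (c0 && c)%:R =
    (A - 2 ^+ (N + N.-1) * c0%:R * c%:R) + B.
  by move=> A B; rewrite -mulnb natrM; ring.
apply: rpredD.
  have -> : 2 ^+ N * 2 ^+ N.-1 * c%:R * (\sum_(M in pm K) \prod_(S in M) dS lam S) -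
            2 ^+ (N + N.-1) * c0%:R * c%:R =
            (2 ^+ (N + N.-1) * c%:R) * ((\sum_(M in pm K) \prod_(S in M) dS lam S) - c0%:R).
    by rewrite exprD; ring.
  have -> : (N + N = (N + N.-1).+1)%N by case: (N) N1 => // n _; rewrite addnS.
  rewrite exprSr; apply: dvdz_mul => //.
  by apply: dvdz_mulr; apply: dvdzz.
apply: rpred_sum => M MK.
rewrite exprD -mulrA; apply: dvdz_mul; first exact: dvdzz.
by apply: dvdz_mull; apply: hM.
Qed.

Lemma Nodd_odd a : Nat.odd a = odd a.
Proof.
have H : forall a, Nat.odd a = odd a /\ Nat.odd a.+1 = odd a.+1.
  elim => [|n [IH1 IH2]] //; split => //.
  by rewrite (_ : Nat.odd n.+2 = Nat.odd n) // IH1 /= negbK.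
exact: (H a).1.
Qed.

Lemma div2_half a : Nat.div2 a = a./2.
Proof.
have H : forall a, Nat.div2 a = a./2 /\ Nat.div2 a.+1 = a.+1./2.
  by elim => [|n [IH1 IH2]] //; split => //=; rewrite IH1.
exact: (H a).1.
Qed.

Lemma testbit_bitn a k : Nat.testbit a k = bitn a k.
Proof.
elim: k a => [|k IH] a /=; first by rewrite Nodd_odd /bitn expn0 divn1.
by rewrite IH div2_half /bitn -divn2 -divnMA expnS.
Qed.

Lemma bitn_lxor a b k : bitn (Nat.lxor a b) k = bitn a k (+) bitn b k.
Proof. by rewrite -!testbit_bitn PeanoNat.Nat.lxor_spec; case: (Nat.testbit a k); case: (Nat.testbit b k). Qed.

Lemma bitn0 k : bitn 0 k = false.
Proof. by rewrite /bitn div0n. Qed.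

Lemma bitn_bigxor n (r : 'I_n -> nat) k :
  bitn (bigxor r) k = odd (\sum_(i < n) (bitn (r i) k : nat)).
Proof.
rewrite /bigxor (big_morph (fun x => bitn x k) (id1 := false) (op1 := addb)).
- by rewrite (big_morph odd (id1 := false) (op1 := addb) oddD) //=; apply: eq_bigr => i _; case: (bitn _ _).
- by move=> x y; rewrite bitn_lxor.
- exact: bitn0.
Qed.

Fixpoint enc (q : nat) : Col q -> nat :=
  match q return Col q -> nat with
  | 0 => fun _ => 0%N
  | q'.+1 => fun y => (y.1 + 2 * @enc q' y.2)%N
  end.

Lemma enc_lt q (x : Col q) : (enc x < 2 ^ q)%N.
Proof.
elim: q x => [|q IH] x //=; case: x => b y /=.
have := IH y; rewrite expnS; case: b => /=; lia.
Qed.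

Lemma enc_inj q : injective (@enc q).
Proof.
elim: q => [|q IH]; first by move=> [] [].
move=> [b x] [b' y] /= e.
have eb : b = b' by move: e; case: b; case: b' => /=; lia.
subst b'; congr (_, _); apply: IH; move: e; lia.
Qed.

Lemma bitn_enc0 q b (x : Col q) : bitn (enc (q := q.+1) (b, x)) 0 = b.
Proof. rewrite /bitn expn0 divn1 /= oddD oddM /=; by case: b. Qed.

Lemma bitn_encS q b (x : Col q) k : bitn (enc (q := q.+1) (b, x)) k.+1 = bitn (enc x) k.
Proof.
rewrite /bitn expnS divnMA /= (_ : ((b + 2 * enc x) %/ 2 = enc x)%N) //.
by rewrite mulnC addnC divnMDl // divn_small ?addn0 //; case: b.
Qed.

Lemma chiC_prod q f (x : Col q) :
  chiC f x = \prod_(k < q) sgn (f k && bitn (enc x) k).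
Proof.
elim: q f x => [|q IH] f x; first by rewrite big_ord0.
case: x => b y; rewrite big_ord_recl /= IH bitn_enc0; congr (_ * _).
by apply: eq_bigr => k _; rewrite bitn_encS.
Qed.

Lemma sign_sum n (b : 'I_n -> bool) :
  (-1) ^+ (\sum_(k < n) (b k : nat)) = \prod_(k < n) sgn (b k) :> int.
Proof.
rewrite (big_morph (fun m => (-1) ^+ m : int) (id1 := 1) (op1 := *%R)); last 2 first.
- by move=> x y; rewrite exprD.
- by [].
by apply: eq_bigr => k _; case: (b k).
Qed.

Lemma perm_cols n (A : 'M[int]_n) :
  permanent A = \sum_(s : 'S_n) \prod_(j < n) A (s j) j.
Proof.
rewrite /permanent (reindex_inj (@invg_inj _)) /=; apply: eq_bigr => s _.
rewrite (reindex_inj (@perm_inj _ s)) /=; apply: eq_bigr => j _.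
by rewrite permK.
Qed.

Lemma perm_ffun n (G : {ffun 'I_n -> 'I_n} -> int) :
  \sum_(s : 'S_n) G (pval s) = \sum_(f : {ffun 'I_n -> 'I_n} | injectiveb f) G f.
Proof.
symmetry; rewrite (reindex (@pval _)) /=; last first.
  pose in_Sn := insubd (1%g : 'S_n).
  by exists in_Sn => /= f Uf; first apply: val_inj; apply: insubdK.
by apply: eq_bigl => s; rewrite (valP s).
Qed.

Definition ecol p (x : Col p) : 'I_(2 ^ p) := Ordinal (enc_lt x).

Lemma ecol_inj p : injective (@ecol p).
Proof. by move=> x y /(congr1 val) /= /enc_inj. Qed.

Lemma cols_Col p (F : 'I_(2 ^ p) -> 'I_(2 ^ p) -> int) :
  \sum_(f : {ffun 'I_(2 ^ p) -> 'I_(2 ^ p)} | injectiveb f) \prod_j F (f j) j =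
  \sum_(tau : {ffun Col p -> 'I_(2 ^ p)} | injectiveb tau)
      \prod_(x : Col p) F (tau x) (ecol x).
Proof.
have ebij : bijective (@ecol p).
  by apply: inj_card_bij; [exact: ecol_inj | rewrite cardCol card_ord].
case: ebij => e' eK e'K.
rewrite (reindex (fun tau : {ffun Col p -> 'I_(2 ^ p)} => [ffun j => tau (e' j)])) /=; last first.
  apply: onW_bij; exists (fun f : {ffun 'I_(2 ^ p) -> 'I_(2 ^ p)} => [ffun x => f (ecol x)]).
    by move=> g; apply/ffunP => y; rewrite !ffunE eK.
  by move=> f; apply/ffunP => y; rewrite !ffunE e'K.
apply: eq_big => tau.
  apply/injectiveP/injectiveP => H.
    move=> x y e; have := H (ecol x) (ecol y); rewrite !ffunE !eK => /(_ e).
    exact: ecol_inj.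
  by move=> x y; rewrite !ffunE => /H /(can_inj e'K).
move=> _; rewrite (reindex (@ecol p)) /=; last first.
  by apply: onW_bij; exists e'.
by apply: eq_bigr => x _; rewrite ffunE eK.
Qed.

Unset Implicit Arguments.

Theorem proposition6 (p : nat) (hp : (2 < 2 ^ p)%N)
    (r : 'I_(2 ^ p) -> 'I_(2 ^ p))
    (hxor : bigxor (fun i => nat_of_ord (r i)) = 0%N) :
  permanent (\matrix_(i < 2 ^ p, j < 2 ^ p) sylvester p (r i) j) != 0.
Proof.
set A := \matrix_(i < 2 ^ p, j < 2 ^ p) sylvester p (r i) j.
set lam := fun (i : 'I_(2 ^ p)) k => bitn (r i) k.
have hP : permanent A = Pq p [set: 'I_(2 ^ p)] lam.
  rewrite perm_cols.
  transitivity (\sum_(f : {ffun 'I_(2 ^ p) -> 'I_(2 ^ p)} | injectiveb f) \prod_j A (f j) j).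
    rewrite -(perm_ffun (fun f => \prod_j A (f j) j)); apply: eq_bigr => s _; apply: eq_bigr => j _; by rewrite pvalE.
  rewrite cols_Col /Pq.
  apply: eq_big => tau.
    by rewrite /validt (_ : [forall x, tau x \in setT] = true) ?andbT //; apply/forallP => x; rewrite in_setT.
  move=> _; apply: eq_bigr => x _.
  by rewrite !mxE /bdot sign_sum chiC_prod.
have hc : condq p [set: 'I_(2 ^ p)] lam = true.
  apply/forallP => k; move: (congr1 (fun x => bitn x k) hxor).
  rewrite bitn_bigxor bitn0 -sum_bool_card => h.
  rewrite (_ : \sum_(i in [set: 'I_(2 ^ p)]) (lam i k : nat) = \sum_(i < 2 ^ p) (bitn (r i) k : nat)).
    by rewrite h.
  by apply: eq_bigl => i; rewrite in_setT.
have := @mainP p _ [set: 'I_(2 ^ p)] lam.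
rewrite cardsT card_ord => /(_ erefl).
rewrite -hP hc /= mulr1 => H; apply/eqP => h0; move: H.
rewrite h0 sub0r rpredN dvdz_Pexp2l //.
have : (0 < 2 ^ p)%N by rewrite expn_gt0.
by case: (2 ^ p)%N => // n _; rewrite ltnn.
Qed.
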